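(* Let $\lambda=(\lambda_1,\lambda_2,\lambda_3)$ with $\lambda_1\ge\lambda_2\ge\lambda_3\ge1$ integers, and $A=\mathcal{L}(\lambda)$. (1) If $\lambda_1=\lambda_2=\lambda_3$: $\mathbb{SG}(A)=0$ if $\lambda_3\ge3$ is odd; $\mathbb{SG}(A)=1$ if $\lambda_3=1$ or $\lambda_3\ge4$ is even; $\mathbb{SG}(A)=2$ if $\lambda_3=2$. (2) If $\lambda_1>\lambda_2=\lambda_3$: $\mathbb{SG}(A)=0$ if $\lambda_3$ is odd, $1$ if $\lambda_3$ is even. (3) If $\lambda_1=\lambda_2>\lambda_3$: $\mathbb{SG}(A)=0$ if $\lambda_3$ is even, $1$ if $\lambda_3$ is odd. (4) If $\lambda_1>\lambda_2>\lambda_3=1$: $\mathbb{SG}(A)=1$ if $\lambda_2$ is even, $2$ if $\lambda_2$ is odd. (5) If $\lambda_1>\lambda_2>\lambda_3>1$: $\mathbb{SG}(A)=0$ if $\lambda_3$ is even, $1$ if $\lambda_3$ is odd.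
   Context: A partition is a finite non-increasing sequence of positive integers; $()$ is the empty partition. For non-negative $i,j$, $\lambda[i,j]$ is $(\lambda_{i+1}-j,\dots,\lambda_r-j)$ with all non-positive entries removed. LCTR: positions $\mathcal{L}(\lambda)$; if $\lambda\neq()$ the two moves go to $\mathcal{L}(\lambda[1,0])$ and $\mathcal{L}(\lambda[0,1])$; $\mathcal{L}(())$ is terminal. Normal play; $\mathbb{SG}(A)=\operatorname{mex}\{\mathbb{SG}(B):A\to B\}$. *)

(* Defs.v *)
From mathcomp Require Import all_boot.
Set Implicit Arguments. Unset Strict Implicit. Unset Printing Implicit Defensive.

(* A partition is represented as a seq nat (non-increasing, positive entries). *)

Definition cut_row (l : seq nat) : seq nat := behead l.

Definition cut_col (l : seq nat) : seq nat := [seq x.-1 | x <- l & 1 < x].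

Definition mex (s : seq nat) : nat :=
  find (fun n => n \notin s) (iota 0 (size s).+1).

(* Sprague-Grundy value with fuel; each move strictly decreases sumn for a
   nonempty partition, so fuel (sumn l) suffices. *)
Fixpoint sg_fuel (k : nat) (l : seq nat) : nat :=
  match k with
  | 0 => 0
  | k'.+1 =>
    if l is [::] then mex [::]
    else mex [:: sg_fuel k' (cut_row l); sg_fuel k' (cut_col l)]
  end.

Definition SG (l : seq nat) : nat := sg_fuel (sumn l).+1 l.

Lemma SG_test : [:: SG [:: 1;1;1]; SG [:: 2;2;2]; SG [:: 3;3;3]; SG [:: 4;4;4];
   SG [:: 5;3;1]; SG [:: 5;4;1]; SG[::6;4;3]; SG[::6;5;3]] = [:: 1;2;0;1;2;1;1;1].
Proof. by vm_compute. Qed.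

(* Main.v *)
Require Import Defs.
From mathcomp Require Import all_boot zify.

Definition F (l : seq nat) : nat :=
  match l with
  | [::] => 0
  | [:: a] => if odd a then 1 else 2
  | [:: a; b] => if a == b then (if odd a then 2 else 0) else (if odd b then 0 else 1)
  | [:: a; b; c] =>
    if c == 1 then (if a == b then 1 else if b == 1 then 0 else if odd b then 2 else 1)
    else if (a == b) && (b == c) then (if c == 2 then 2 else if odd c then 0 else 1)
    else if b == c then (if odd c then 0 else 1)
    else (if odd c then 1 else 0)
  | _ => 0
  end.

Definition valid (l : seq nat) : bool :=
  match l with
  | [::] => true
  | [:: a] => 0 < a
  | [:: a; b] => (0 < b) && (b <= a)
  | [:: a; b; c] => [&& 0 < c, c <= b & b <= a]
  | _ => false
  end.

Ltac splitifs :=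
  repeat match goal with
  | |- context [if ?b then _ else _] => case: (boolP b) => ? /=
  end.

Ltac fin := try done; try lia;
  repeat match goal with
  | H : is_true (?x == ?y) |- _ => move/eqP: H => H; subst
  end; try done; try lia;
  repeat match goal with
  | H : is_true (odd _) |- _ => rewrite H in * ; clear H
  end; try done.

Lemma step l : valid l -> l != [::] -> F l = mex [:: F (cut_row l); F (cut_col l)].
Proof.
case: l => [|a [|b [|c [|d t]]]] //=.
- case: a => [|[|a]] //= _ _; by rewrite /cut_col /= ?negbK; splitifs; fin.
- case: b => [|[|b]] //=; case: a => [|[|a]] //= _ _; rewrite /cut_col /= ?negbK ?eqSS; splitifs; fin.
- case: c => [|[|c]] //=; case: b => [|[|b]] //=; case: a => [|[|a]] //= H _;
  rewrite /cut_col /= ?negbK ?eqSS; splitifs; fin.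
  all: try (exfalso; lia).
  all: idtac.
Qed.
Lemma step_ok l : valid l -> l != [::] ->
  [&& valid (cut_row l), valid (cut_col l), sumn (cut_row l) < sumn l & sumn (cut_col l) < sumn l].
Proof.
case: l => [|a [|b [|c [|d t]]]] //=.
- case: a => [|[|a]] //= _ _; rewrite /cut_col /=; lia.
- case: b => [|[|b]] //=; case: a => [|[|a]] //= H _; rewrite /cut_col /=; lia.
- case: c => [|[|c]] //=; case: b => [|[|b]] //=; case: a => [|[|a]] //= H _;
  rewrite /cut_col /=; lia.
Qed.

Lemma sgF k l : valid l -> sumn l < k -> sg_fuel k l = F l.
Proof.
elim: k l => [|k IH] [|x t] // Hv Hs.
have := @step_ok (x :: t) Hv isT; case/and4P => H1 H2 H3 H4.
rewrite (@step (x :: t) Hv isT) /= -!IH //; simpl in *; lia.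
Qed.

Theorem mainTheorem9 (l1 l2 l3 : nat) :
  1 <= l3 -> l3 <= l2 -> l2 <= l1 ->
  let A := SG [:: l1; l2; l3] in
  (* (1) *)
  (l1 = l2 -> l2 = l3 ->
     ((3 <= l3 -> odd l3 -> A = 0) /\
      (l3 = 1 \/ (4 <= l3 /\ ~~ odd l3) -> A = 1) /\
      (l3 = 2 -> A = 2))) /\
  (* (2) *)
  (l2 < l1 -> l2 = l3 -> A = (if odd l3 then 0 else 1)) /\
  (* (3) *)
  (l1 = l2 -> l3 < l2 -> A = (if odd l3 then 1 else 0)) /\
  (* (4) *)
  (l2 < l1 -> l3 < l2 -> l3 = 1 -> A = (if odd l2 then 2 else 1)) /\
  (* (5) *)
  (l2 < l1 -> l3 < l2 -> 1 < l3 -> A = (if odd l3 then 1 else 0)).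
Proof.
move=> h1 h2 h3 A.
have -> : A = F [:: l1; l2; l3].
  rewrite /A /SG sgF //= ?h1 ?h2 ?h3 //.
rewrite /F.
split; [move=> e1 e2; subst; split; [|split]|split; [|split; [|split]]] => *;
  subst; splitifs; fin; try (exfalso; lia).
Qed.
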